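(* Let $n,m\ge1$ be integers (not necessarily distinct). Then for the Ramsey number $\mathcal{R}_{\mathcal{DIV}}$ with respect to the class $\mathcal{DIV}$ of divisibility graphs, \[ \mathcal{R}_{\mathcal{DIV}}(n,m)=\mathcal{R}_{\mathcal{PO}}(n,m)=(n-1)(m-1)+1 . \]
   Context: For a commutative ring $R$ (with $1\ne0$), a proper element is a non-zero non-unit; for distinct $a,b$, $a\parallel b$ means $a\mid b$ and $b\nmid a$. The divisibility graph $\mathrm{Div}(R)$ has the proper elements of $R$ as vertices, distinct $a,b$ adjacent iff $a\parallel b$ or $b\parallel a$; $\mathcal{DIV}$ is the class of all divisibility graphs of commutative rings. $\mathcal{PO}$ is the class of partial order graphs $G_A$ of posets $(A,\le)$ (vertex set $A$, distinct $a,b$ adjacent iff $a\le b$ or $b\le a$). For a class $\mathcal{C}$ of graphs, $\mathcal{R}_{\mathcal{C}}(n,m)$ is the minimal $r$ such that every induced subgraph with $r$ vertices of any graph in $\mathcal{C}$ contains either $K_n$ or an independent set of $m$ vertices. *)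

(* Defs.v *)
From mathcomp Require Import all_boot all_algebra.
Set Implicit Arguments. Unset Strict Implicit. Unset Printing Implicit Defensive.
Import GRing.Theory.
Local Open Scope ring_scope.

Definition rdivides (R : comNzRingType) (a b : R) : Prop := exists c : R, b = a * c.
Definition runit (R : comNzRingType) (a : R) : Prop := exists u : R, a * u = 1.
Definition proper_elt (R : comNzRingType) (a : R) : Prop := a <> 0 /\ ~ runit a.
Definition sdiv (R : comNzRingType) (a b : R) : Prop :=
  a <> b /\ rdivides a b /\ ~ rdivides b a.
Definition div_adj (R : comNzRingType) (a b : R) : Prop := sdiv a b \/ sdiv b a.

Definition po_adj (A : Type) (le : A -> A -> Prop) (a b : A) : Prop :=
  a <> b /\ (le a b \/ le b a).

Definition is_poset (A : Type) (le : A -> A -> Prop) : Prop :=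
  (forall a, le a a) /\ (forall a b, le a b -> le b a -> a = b) /\
  (forall a b c, le a b -> le b c -> le a c).

(* Every induced subgraph on r distinct vertices (f : 'I_r -> V injective,
   with vertices satisfying the vertex predicate Vert) contains K_n or an
   independent set of m vertices. *)
Definition ramsey_good (V : Type) (Vert : V -> Prop) (adj : V -> V -> Prop)
    (n m r : nat) : Prop :=
  forall f : 'I_r -> V, injective f -> (forall i, Vert (f i)) ->
    (exists g : 'I_n -> 'I_r, injective g /\
       forall i j, i <> j -> adj (f (g i)) (f (g j))) \/
    (exists h : 'I_m -> 'I_r, injective h /\
       forall i j, i <> j -> ~ adj (f (h i)) (f (h j))).

Definition DIV_good (n m r : nat) : Prop :=
  forall R : comNzRingType, ramsey_good (@proper_elt R) (@div_adj R) n m r.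

Definition PO_good (n m r : nat) : Prop :=
  forall (A : Type) (le : A -> A -> Prop), is_poset le ->
    ramsey_good (fun _ : A => True) (po_adj le) n m r.

Definition is_least (P : nat -> Prop) (N : nat) : Prop :=
  P N /\ forall r, P r -> (N <= r)%N.

(* Main.v *)
Require Import Defs.
From mathcomp Require Import all_boot all_algebra.
From mathcomp Require Import zify.
From Stdlib Require Import ClassicalEpsilon.


Definition pb (P : Prop) : bool := if excluded_middle_informative P then true else false.
Lemma pbP P : reflect P (pb P).
Proof. by rewrite /pb; case: excluded_middle_informative => h; constructor. Qed.

Lemma exists_min (T : finType) (lt : rel T) (irr : irreflexive lt)
  (tr : forall x y z, lt x y -> lt y z -> lt x z) (C : {set T}) x0 :
  x0 \in C -> exists2 c, c \in C & forall z, z \in C -> ~~ lt z c.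
Proof.
move=> Hx0.
case: (arg_minnP (fun x => #|[set y in C | lt y x]|) Hx0) => c Hc Hmin.
exists c => // z Hz; apply/negP => Hzc.
have : [set y in C | lt y z] \proper [set y in C | lt y c].
  apply/properP; split.
    apply/subsetP => y; rewrite !inE => /andP[-> Hyz] /=. exact: tr Hyz Hzc.
  by exists z; rewrite !inE ?Hz ?Hzc ?irr.
by move/proper_card; rewrite ltnNge Hmin.
Qed.

Lemma mirsky (T : finType) (lt : rel T) (irr : irreflexive lt)
  (tr : forall x y z, lt x y -> lt y z -> lt x z) m :
  forall n (S : {set T}), 0 < n -> n.-1 * m.-1 < #|S| ->
 (exists2 C : {set T}, (C \subset S) && (n <= #|C|) &
     forall x y, x \in C -> y \in C -> x != y -> lt x y || lt y x)
 \/ (exists2 A : {set T}, (A \subset S) && (m <= #|A|) &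
     forall x y, x \in A -> y \in A -> ~~ lt x y).
Proof.
elim=> [//|n IH] S _ HS.
case: n IH HS => [|n] IH HS.
  have [x Hx] : exists x, x \in S by apply/set0Pn; rewrite -card_gt0.
  left; exists [set x]; first by rewrite sub1set Hx cards1.
  by move=> y z; rewrite !inE => /eqP-> /eqP->; rewrite eqxx.
set M := [set x in S | [forall y in S, ~~ lt y x]].
have MS : M \subset S by apply/subsetP => x; rewrite inE => /andP[].
case: (leqP m #|M|) => HM.
  right; exists M; first by rewrite HM MS.
  by move=> x y; rewrite !inE => /andP[Hx _] /andP[_ /forall_inP Hy]; apply: Hy.
have HS' : n.+1.-1 * m.-1 < #|S :\: M|.
  rewrite cardsD (setIidPr MS) /=. move: HS => /=. nia.
case: (IH (S :\: M) isT HS') => [[C /andP[CS HC] Hch] | [A /andP[AS HA] Hac]].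
  have [x0 Hx0] : exists x, x \in C by apply/set0Pn; rewrite -card_gt0; apply: leq_trans HC.
  have [c Hc Hcmin] := @exists_min _ _ irr tr _ _ Hx0.
  have := subsetP CS c Hc; rewrite !inE => /andP[HcM HcS].
  rewrite HcS /= in HcM.
  case/forall_inPn: HcM => y Hy /negPn Hyc.
  have yC : y \notin C by apply/negP => /Hcmin; rewrite Hyc.
  left; exists (y |: C).
    rewrite cardsU1 yC /= ltnS HC andbT subUset sub1set Hy /=.
    by apply: subset_trans CS (subsetDl _ _).
  have ylt : forall z, z \in C -> lt y z.
    move=> z Hz; case: (eqVneq z c) => [->//|Hzc].
    case/orP: (Hch _ _ Hz Hc Hzc) => [Hzc'|Hcz]; first by move: (Hcmin _ Hz); rewrite Hzc'.
    exact: tr Hyc Hcz.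
  move=> a b; rewrite !inE => /orP[/eqP->|Ha] /orP[/eqP->|Hb]; rewrite ?eqxx //.
  - by rewrite ylt.
  - by rewrite ylt ?orbT.
  - exact: Hch.
right; exists A => //; rewrite HA andbT.
by apply: subset_trans AS (subsetDl _ _).
Qed.

Lemma upper (V : Type) (Vert : V -> Prop) (adj : V -> V -> Prop) (lt : V -> V -> Prop) :
  (forall a, ~ lt a a) -> (forall a b c, lt a b -> lt b c -> lt a c) ->
  (forall a b, adj a b <-> lt a b \/ lt b a) ->
  forall n m, 0 < n -> 0 < m -> ramsey_good Vert adj n m ((n - 1) * (m - 1) + 1).
Proof.
move=> irr tr hadj n m hn hm f _ _.
set r := ((n - 1) * (m - 1) + 1).
pose ltb (i j : 'I_r) := pb (lt (f i) (f j)).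
have irrb : irreflexive ltb by move=> i; apply/pbP; apply: irr.
have trb : forall x y z, ltb x y -> ltb y z -> ltb x z.
  by move=> x y z /pbP h1 /pbP h2; apply/pbP; apply: tr h1 h2.
have := @mirsky _ ltb irrb trb m n setT hn.
rewrite cardsT card_ord => /(_ _)[|[C /andP[_ HC] Hch]|[A /andP[_ HA] Hac]].
- rewrite /r; nia.
- left; exists (fun i => enum_val (widen_ord HC i)); split.
    by move=> i j /enum_val_inj /(congr1 val) /= /val_inj.
  move=> i j hij; apply/hadj.
  have hne : enum_val (widen_ord HC i) != enum_val (widen_ord HC j).
    apply/negP => /eqP /enum_val_inj /(congr1 val) /= /val_inj //.
  by case/orP: (Hch _ _ (enum_valP _) (enum_valP _) hne) => /pbP; [left|right].
- right; exists (fun i => enum_val (widen_ord HA i)); split.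
    by move=> i j /enum_val_inj /(congr1 val) /= /val_inj.
  move=> i j hij /hadj [] h.
    by move/negP: (Hac _ _ (enum_valP (widen_ord HA i)) (enum_valP (widen_ord HA j))); apply; apply/pbP.
  by move/negP: (Hac _ _ (enum_valP (widen_ord HA j)) (enum_valP (widen_ord HA i))); apply; apply/pbP.
Qed.

Lemma lower_idx n m r : 1 < n -> 1 < m -> r <= (n - 1) * (m - 1) ->
 (forall g : 'I_n -> 'I_r, injective g ->
    ~ (forall i j, i <> j -> (g i : nat) %/ (n - 1) = (g j) %/ (n - 1))) /\
 (forall h : 'I_m -> 'I_r, injective h ->
    ~ (forall i j, i <> j -> (h i : nat) %/ (n - 1) <> (h j) %/ (n - 1))).
Proof.
move=> hn hm hr; have hn1 : 0 < n - 1 by lia.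
split.
  move=> g gi H.
  pose k (i : 'I_n) : 'I_(n - 1) := Ordinal (ltn_pmod (g i) hn1).
  have ki : injective k.
    move=> i j /(congr1 val) /= hk.
    case: (eqVneq i j) => [//|/eqP hij].
    have := H _ _ hij => hq.
    apply: gi; apply: val_inj; change (nat_of_ord (g i) = g j).
    by rewrite (divn_eq (g i) (n - 1)) (divn_eq (g j) (n - 1)) hq hk.
  by have := @leq_card _ _ k ki; rewrite !card_ord; lia.
move=> h hi H.
have hb : forall i, (h i : nat) %/ (n - 1) < m - 1.
  move=> i; rewrite ltn_divLR //; have := ltn_ord (h i); lia.
pose k (i : 'I_m) : 'I_(m - 1) := Ordinal (hb i).
have ki : injective k.
  move=> i j /(congr1 val) /= hk.
  case: (eqVneq i j) => [//|/eqP hij].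
  by case: (H _ _ hij).
by have := @leq_card _ _ k ki; rewrite !card_ord; lia.
Qed.

Lemma not_good V (Vert : V -> Prop) adj n m r (f : 'I_r -> V) :
  1 < n -> 1 < m -> r <= (n - 1) * (m - 1) -> injective f -> (forall i, Vert (f i)) ->
  (forall i j : 'I_r, adj (f i) (f j) <-> i <> j /\ (i : nat) %/ (n - 1) = j %/ (n - 1)) ->
  ~ ramsey_good Vert adj n m r.
Proof.
move=> hn hm hr fi fv hadj H.
have [L1 L2] := @lower_idx n m r hn hm hr.
case: (H f fi fv) => [[g [gi gadj]] | [h [hi hadj']]].
  by apply: (L1 g gi) => i j /gadj /hadj [].
apply: (L2 h hi) => i j hij hq; apply: (hadj' i j hij); apply/hadj; split=> //.
by move/hi.
Qed.

Lemma not_good0 V (Vert : V -> Prop) adj n m : 0 < n -> 0 < m -> ~ ramsey_good Vert adj n m 0.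
Proof.
move=> hn hm H.
have f0 : 'I_0 -> V by case=> k; rewrite ltn0.
have fi : injective f0 by move=> i; have := ltn_ord i; rewrite ltn0.
have fv : forall i, Vert (f0 i) by move=> i; have := ltn_ord i; rewrite ltn0.
case: (H f0 fi fv) => [[g _]|[h _]].
  by case: (g (Ordinal hn)).
by case: (h (Ordinal hm)).
Qed.

Lemma dvd23 a b c d : (2 ^ a * 3 ^ b %| 2 ^ c * 3 ^ d) = (a <= c) && (b <= d).
Proof.
apply/idP/andP.
  move=> H.
  have hp : 0 < 2 ^ c * 3 ^ d by rewrite muln_gt0 !expn_gt0.
  have h1 := dvdn_leq_log 2 hp H.
  have h2 := dvdn_leq_log 3 hp H.
  rewrite !lognM ?expn_gt0 // !lognX in h1 h2.
  have e23 : logn 2 3 = 0 by [].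
  have e32 : logn 3 2 = 0 by [].
  have e22 : logn 2 2 = 1 by [].
  have e33 : logn 3 3 = 1 by [].
  rewrite e23 e32 e22 e33 in h1 h2; lia.
by case=> h1 h2; apply: dvdn_mul; apply: dvdn_exp2l.
Qed.

Definition ee n m i := 2 ^ i.+1 * 3 ^ (m - i %/ (n - 1)).

Lemma ee_dvd n m i j : i %/ (n - 1) < m -> j %/ (n - 1) < m ->
  (ee n m i %| ee n m j) = (i <= j) && (i %/ (n - 1) == j %/ (n - 1)).
Proof.
rewrite /ee dvd23 => hi hj.
case: (leqP i j) => hij.
  have := leq_div2r (n - 1) hij.
  move: hi hj; set qi := i %/ (n - 1); set qj := j %/ (n - 1) => hi hj hq.
  apply/andP/andP; case=> h1 h2; split; lia.
by rewrite ltnS leqNgt hij.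
Qed.

Lemma ee_adj n m i j : i %/ (n - 1) < m -> j %/ (n - 1) < m ->
  (ee n m i %| ee n m j) || (ee n m j %| ee n m i) = (i %/ (n - 1) == j %/ (n - 1)).
Proof.
move=> hi hj; rewrite !ee_dvd // [j %/ _ == _]eq_sym.
by case: eqP => _; rewrite ?andbF ?andbT ?leq_total.
Qed.

Lemma ee_inj n m i j : i %/ (n - 1) < m -> j %/ (n - 1) < m ->
  ee n m i = ee n m j -> i = j.
Proof.
move=> hi hj h.
have : ee n m i %| ee n m j by rewrite h.
have : ee n m j %| ee n m i by rewrite h.
rewrite !ee_dvd // => /andP[h1 _] /andP[h2 _]; lia.
Qed.

Lemma ee_gt1 n m i : 1 < ee n m i.
Proof.
rewrite /ee; have : 0 < 3 ^ (m - i %/ (n - 1)) by rewrite expn_gt0.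
have : 0 < 2 ^ i by rewrite expn_gt0.
rewrite expnS; nia.
Qed.

Import GRing.Theory.
Local Open Scope ring_scope.
Lemma rdivP (a b : nat) : rdivides (a%:Z) (b%:Z) <-> (a %| b)%N.
Proof.
split.
  case=> c hc; have := congr1 absz hc; rewrite abszM /= => ->.
  exact: dvdn_mulr.
case/dvdnP=> k ->; exists k%:Z; by rewrite PoszM mulrC.
Qed.

Lemma rdiv_trans (R : comNzRingType) (a b c : R) : rdivides a b -> rdivides b c -> rdivides a c.
Proof. by case=> x -> [y ->]; exists (x * y); rewrite mulrA. Qed.
Local Close Scope ring_scope.

Theorem theorem3p8 (n m : nat) (hn : (1 <= n)%N) (hm : (1 <= m)%N) :
  is_least (DIV_good n m) ((n - 1) * (m - 1) + 1)%N /\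
  is_least (PO_good n m) ((n - 1) * (m - 1) + 1)%N.
Proof.
have pos : is_poset (fun a b : nat => is_true (a %| b)).
  split; first by move=> a; exact: dvdnn.
  split; first by move=> a b h1 h2; apply/eqP; rewrite eqn_dvd h1 h2.
  by move=> a b c; apply: dvdn_trans.
have bnd : forall r (i : 'I_r.+1), r.+1 < (n - 1) * (m - 1) + 1 -> i %/ (n - 1) < m.
  move=> r i hr; have hn1 : 0 < n - 1 by nia.
  rewrite ltn_divLR //; have := ltn_ord i; nia.
split; split.
- move=> R; apply: (@upper R _ _ (@sdiv R)) => //.
  + by move=> a [].
  + move=> a b c [hab [dab ndba]] [hbc [dbc ndcb]]; split.
      by move=> hac; subst c; apply: ndcb.
    split; first exact: rdiv_trans dab dbc.
    by move=> dca; apply: ndcb; apply: rdiv_trans dca dab.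
- move=> r H; rewrite leqNgt; apply/negP => hr.
  case: r H hr => [|r] H hr; first exact: (@not_good0 _ _ _ _ _ hn hm (H int)).
  have hn2 : 1 < n by nia.
  have hm2 : 1 < m by nia.
  have hsd : forall i j : 'I_r.+1, sdiv (Posz (ee n m i)) (Posz (ee n m j)) <->
      i <> j /\ (ee n m i %| ee n m j).
    move=> i j; split.
      case=> hne [/rdivP d _]; split=> // hij; apply: hne; by rewrite hij.
    case=> hij d; split.
      move=> [] h; apply: hij; apply: val_inj; exact: (@ee_inj n m _ _ (bnd _ _ hr) (bnd _ _ hr) h).
    split; first exact/rdivP.
    move/rdivP => d'; apply: hij; apply: val_inj; apply: (@ee_inj n m _ _ (bnd _ _ hr) (bnd _ _ hr)).
    by apply/eqP; rewrite eqn_dvd d d'.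
  apply: (@not_good int _ _ n m r.+1 (fun i => Posz (ee n m i)) hn2 hm2 _ _ _ _ (H int)).
  + nia.
  + move=> i j [] h; apply: val_inj; exact: (@ee_inj n m _ _ (bnd _ _ hr) (bnd _ _ hr) h).
  + move=> i; split.
      by move=> [] h; have := ee_gt1 n m i; rewrite h.
    case=> u hu.
    have : rdivides (Posz (ee n m i)) (Posz 1) by exists u.
    by move/rdivP; rewrite dvdn1 => /eqP h; have := ee_gt1 n m i; rewrite h.
  + move=> i j; rewrite /div_adj !hsd; split.
      case=> [[hij d]|[hij d]].
        split=> //; by apply/eqP; rewrite -(ee_adj n m) ?(bnd _ _ hr) // d.
      split; first by move=> h; apply: hij.
      by apply/eqP; rewrite -(ee_adj n m) ?(bnd _ _ hr) // d orbT.
    case=> hij hq; have := @ee_adj n m i j (bnd _ i hr) (bnd _ j hr); rewrite hq eqxx.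
    by case/orP=> d; [left|right]; split=> // h; apply: hij.
- move=> A le [hr [ha ht]].
  apply: (@upper A _ _ (fun a b => a <> b /\ le a b)) => //.
  + by move=> a [].
  + move=> a b c [hab lab] [hbc lbc]; split; last exact: ht lab lbc.
    by move=> hac; subst c; apply: hab; apply: ha.
  + move=> a b; rewrite /po_adj; split.
      case=> hab [l|l]; [left|right]; split=> // h; apply: hab; by rewrite h.
    by case=> [[hab l]|[hab l]]; (split; [move=> h; apply: hab; rewrite h | by [left|right]]).
- move=> r H; rewrite leqNgt; apply/negP => hr.
  case: r H hr => [|r] H hr; first exact: (@not_good0 _ _ _ _ _ hn hm (H nat _ pos)).
  have hn2 : 1 < n by nia.
  have hm2 : 1 < m by nia.
  apply: (@not_good nat _ _ n m r.+1 (fun i => ee n m i) hn2 hm2 _ _ _ _ (H nat _ pos)) => //.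
  + nia.
  + move=> i j h; apply: val_inj; exact: (@ee_inj n m _ _ (bnd _ _ hr) (bnd _ _ hr) h).
  + move=> i j; rewrite /po_adj; split.
      case=> hne hd; split; first by move=> h; apply: hne; rewrite h.
      by apply/eqP; rewrite -(ee_adj n m) ?(bnd _ _ hr) //; case: hd => ->; rewrite ?orbT.
    case=> hij hq; split.
      move=> h; apply: hij; apply: val_inj; exact: (@ee_inj n m _ _ (bnd _ _ hr) (bnd _ _ hr) h).
    have := @ee_adj n m i j (bnd _ i hr) (bnd _ j hr); rewrite hq eqxx.
    by case/orP=> d; [left|right].
Qed.
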